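(* Let $\mathbf A$ be a residuated semigroup balanced over $\mathbf I$. If $u_{a/b}=u_au_b$ holds for all $a,b\in A$, then $u_{ab}=u_au_b$ holds for all $a,b\in A$. Likewise, if $u_{b\backslash a}=u_au_b$ holds for all $a,b\in A$, then $u_{ab}=u_au_b$ holds for all $a,b\in A$.
   Context: A residuated semigroup is a structure $\langle A,\le,\cdot,\backslash,/\rangle$ where $\langle A,\le\rangle$ is a poset, $\langle A,\cdot\rangle$ is a semigroup, and $xy\le z\iff x\le z/y\iff y\le x\backslash z$. An element $p$ is positive if $a\le pa$ and $a\le ap$ for all $a$, idempotent if $pp=p$, central if $pa=ap$ for all $a$. Let $I$ be a nonempty set of central positive idempotents of $\mathbf A$ closed under multiplication ($\mathbf I=\langle I,\cdot\rangle$). $\mathbf A$ is balanced over $\mathbf I$ if for every $a\in A$ the element $u_a:=\max\{p\in I: pa=a\}$ exists (maximum w.r.t. $\le$). *)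

(* Defs.v *)
Record residuated_semigroup := {
  rs_carrier :> Type;
  rs_le : rs_carrier -> rs_carrier -> Prop;
  rs_mul : rs_carrier -> rs_carrier -> rs_carrier;
  rs_ldiv : rs_carrier -> rs_carrier -> rs_carrier;
  rs_rdiv : rs_carrier -> rs_carrier -> rs_carrier;
  rs_le_refl : forall x, rs_le x x;
  rs_le_antisym : forall x y, rs_le x y -> rs_le y x -> x = y;
  rs_le_trans : forall x y z, rs_le x y -> rs_le y z -> rs_le x z;
  rs_mul_assoc : forall x y z, rs_mul x (rs_mul y z) = rs_mul (rs_mul x y) z;
  rs_res_r : forall x y z, rs_le (rs_mul x y) z <-> rs_le x (rs_rdiv z y);
  rs_res_l : forall x y z, rs_le (rs_mul x y) z <-> rs_le y (rs_ldiv x z)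
}.

Section Defs.
Variable A : residuated_semigroup.
Local Notation le := (rs_le A).
Local Notation mul := (rs_mul A).

Definition positive (p : A) : Prop := forall a, le a (mul p a) /\ le a (mul a p).
Definition idempotent (p : A) : Prop := mul p p = p.
Definition central (p : A) : Prop := forall a, mul p a = mul a p.

Definition cpi_subsemigroup (I : A -> Prop) : Prop :=
  (exists p, I p) /\
  (forall p, I p -> central p /\ positive p /\ idempotent p) /\
  (forall p q, I p -> I q -> I (mul p q)).

Definition is_u (I : A -> Prop) (a p : A) : Prop :=
  I p /\ mul p a = a /\ (forall q, I q -> mul q a = a -> le q p).

Definition balanced (I : A -> Prop) : Prop := forall a, exists p, is_u I a p.
End Defs.

(* Main.v *)
Require Import Defs.

Lemma core (A : residuated_semigroup) (I : A -> Prop) (u : A -> A) (p q : A) :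
  I p -> I q -> rs_mul A p p = p -> rs_mul A q q = q -> central A p ->
  (exists y, u y = p) ->
  (exists x, u x = q) ->
  (forall x, rs_mul A (u x) p = rs_mul A (u x) q) -> p = q.
Proof.
  intros Ip Iq pp qq cp [y up] [x ux] H.
  pose proof (H y) as H1. rewrite up, pp in H1.
  pose proof (H x) as H2. rewrite ux, qq in H2.
  rewrite H1, (cp q). exact H2.
Qed.

Lemma rdiv_mul (A : residuated_semigroup) (x a b : A) :
  rs_rdiv A x (rs_mul A a b) = rs_rdiv A (rs_rdiv A x b) a.
Proof.
  apply rs_le_antisym.
  - apply (proj1 (rs_res_r _ _ _ _)), (proj1 (rs_res_r _ _ _ _)). rewrite <- rs_mul_assoc.
    apply (proj2 (rs_res_r _ _ _ _)), rs_le_refl.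
  - apply (proj1 (rs_res_r _ _ _ _)). rewrite rs_mul_assoc.
    apply (proj2 (rs_res_r _ _ _ _)), (proj2 (rs_res_r _ _ _ _)), rs_le_refl.
Qed.

Lemma ldiv_mul (A : residuated_semigroup) (x a b : A) :
  rs_ldiv A (rs_mul A a b) x = rs_ldiv A b (rs_ldiv A a x).
Proof.
  apply rs_le_antisym.
  - apply (proj1 (rs_res_l _ _ _ _)), (proj1 (rs_res_l _ _ _ _)). rewrite rs_mul_assoc.
    apply (proj2 (rs_res_l _ _ _ _)), rs_le_refl.
  - apply (proj1 (rs_res_l _ _ _ _)). rewrite <- rs_mul_assoc.
    apply (proj2 (rs_res_l _ _ _ _)), (proj2 (rs_res_l _ _ _ _)), rs_le_refl.
Qed.

Theorem lemma6p5 (A : residuated_semigroup) (I : A -> Prop) (u : A -> A) :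
  cpi_subsemigroup A I ->
  balanced A I ->
  (forall a, is_u A I a (u a)) ->
  ((forall a b, u (rs_rdiv A a b) = rs_mul A (u a) (u b)) ->
     forall a b, u (rs_mul A a b) = rs_mul A (u a) (u b)) /\
  ((forall a b, u (rs_ldiv A b a) = rs_mul A (u a) (u b)) ->
     forall a b, u (rs_mul A a b) = rs_mul A (u a) (u b)).
Proof.
  intros [_ [HI Hcl]] _ Hu.
  assert (IU : forall a, I (u a)) by (intro a; apply (Hu a)).
  assert (Cen : forall a, central A (u a)) by (intro a; apply (HI _ (IU a))).
  assert (Id : forall a, rs_mul A (u a) (u a) = u a) by (intro a; apply (HI _ (IU a))).
  assert (Iq : forall a b, I (rs_mul A (u a) (u b))) by (intros; apply Hcl; auto).
  assert (Idq : forall a b, rs_mul A (rs_mul A (u a) (u b)) (rs_mul A (u a) (u b))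
                            = rs_mul A (u a) (u b)) by (intros; apply (HI _ (Iq a b))).
  split; intros H a b.
  - apply (core A I u); auto.
    + exists (rs_mul A a b). reflexivity.
    + exists (rs_rdiv A a b). apply H.
    + intro x. rewrite <- H, rdiv_mul, H, H.
      rewrite <- !rs_mul_assoc. f_equal. apply Cen.
  - apply (core A I u); auto.
    + exists (rs_mul A a b). reflexivity.
    + exists (rs_ldiv A b a). apply H.
    + intro x. rewrite <- H, ldiv_mul, H, H.
      rewrite <- !rs_mul_assoc. reflexivity.
Qed.
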